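(* Let $L$ be a regular language over a nonempty finite alphabet $A$ with minimal automaton $\mathcal{A}_L$. Then $\mu(L)=1$ if and only if $\mathcal{A}_L$ is a zero automaton whose (unique) sink state is final, and $\mu(L)=0$ if and only if $\mathcal{A}_L$ is a zero automaton whose sink state is non-final.
   Context: Automata are complete, deterministic, finite and accessible, $\langle Q,A,\cdot,q_0,F\rangle$. $\mu(L)=\lim_{n\to\infty}|L\cap A^n|/|A|^n$ when the limit exists. A sink state $q$ satisfies $q\cdot a=q$ for all $a\in A$. A zero automaton is an automaton that has a sink state and a synchronising word $w$ (a word such that $p\cdot w$ is the same state for all $p\in Q$). *)

(* Defs.v *)
From HB Require Import structures.
From mathcomp Require Import all_boot all_order all_algebra.
Set Implicit Arguments. Unset Strict Implicit. Unset Printing Implicit Defensive.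
Import Order.TTheory GRing.Theory Num.Theory.
Local Open Scope ring_scope.

Record dfa (A : finType) := Dfa {
  state : finType;
  trans : state -> A -> state;
  init : state;
  final : pred state
}.

Arguments final {A} d.
Arguments trans {A} d.
Arguments init {A} d.

Section Automata.
Variable A : finType.
Variable M : dfa A.

Definition run (p : state M) (w : seq A) : state M := foldl (trans M) p w.

Definition accepts (w : seq A) : bool := final M (run (init M) w).

Definition accessible : Prop := forall q : state M, exists w, run (init M) w = q.

Definition reduced : Prop :=
  forall p q : state M, (forall w, final M (run p w) = final M (run q w)) -> p = q.

Definition is_sink (q : state M) : Prop := forall a : A, trans M q a = q.

Definition synchronising (w : seq A) : Prop :=
  forall p p' : state M, run p w = run p' w.

Definition zero_automaton : Prop :=
  (exists q, is_sink q) /\ (exists w, synchronising w).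

End Automata.

(* M is the minimal automaton of L: accessible, reduced, recognises L
   (unique up to isomorphism). *)
Definition minimal_automaton_of (A : finType) (M : dfa A) (L : pred (seq A)) : Prop :=
  [/\ accessible M, reduced M & forall w, L w = accepts M w].

Definition density_at (A : finType) (L : pred (seq A)) (n : nat) : rat :=
  (#|[set t : n.-tuple A | L (tval t)]|)%:R / (#|A| ^ n)%:R.

Definition density_is (A : finType) (L : pred (seq A)) (l : rat) : Prop :=
  forall eps : rat, 0 < eps ->
    exists N : nat, forall n : nat, (N <= n)%N -> `|density_at L n - l| < eps.

(* Main.v *)
Require Import Defs.
From HB Require Import structures.
From mathcomp Require Import all_boot all_order all_algebra.
From mathcomp Require Import zify.
From Stdlib Require Import Classical.
Set Implicit Arguments. Unset Strict Implicit. Unset Printing Implicit Defensive.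
Import Order.TTheory GRing.Theory Num.Theory.

Section Count.
Variable A : finType.
Variable M : dfa A.
Implicit Types (p q : state M) (P : pred (state M)).

Fixpoint cnt P n p : nat :=
  if n is n'.+1 then \sum_(a : A) cnt P n' (trans M p a) else P p.

Lemma card_tuple_cons n (Q : seq A -> bool) :
  #|[set t : n.+1.-tuple A | Q t]| = \sum_(a : A) #|[set t : n.-tuple A | Q (a :: t)]|.
Proof.
rewrite -sum1_card.
have -> : \sum_(t in [set t : n.+1.-tuple A | Q t]) 1 = \sum_(t : n.+1.-tuple A) (Q t : nat).
  by rewrite big_mkcond /=; apply: eq_bigr => t _; rewrite inE; case: (Q t).
rewrite (reindex (fun x : A * n.-tuple A => [tuple of x.1 :: x.2])) /=; last first.
  exists (fun t : n.+1.-tuple A => (thead t, [tuple of behead t])).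
    by move=> [a t] _; apply/eqP; rewrite xpair_eqE /= theadE eqxx /=; apply/eqP/val_inj.
  by move=> t _; apply/val_inj => /=; case: t => [[|a s] //].
rewrite -(pair_bigA _ (fun a t => (Q (a :: (val t)) : nat))) /=; apply: eq_bigr => a _.
rewrite -sum1_card [RHS]big_mkcond /=; apply: eq_bigr => t _; rewrite inE; by case: (Q _).
Qed.

Lemma cnt_card P n p : #|[set t : n.-tuple A | P (run p t)]| = cnt P n p.
Proof.
elim: n p => [|n IH] p /=.
  rewrite -sum1_card big_mkcond /= (big_pred1 [tuple]) ?sum1_card.
    by rewrite inE /run /=; case: (P p).
  by move=> t; rewrite /= [t]tuple0; apply/eqP.
rewrite (card_tuple_cons _ (fun s => P (run p s))); apply: eq_bigr => a _; exact: IH.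
Qed.
Local Notation s := #|A|.

Lemma sumA_const c : \sum_(a : A) c = s * c.
Proof. by rewrite sum_nat_const. Qed.

Lemma cnt_compl P n p : cnt P n p + cnt (predC P) n p = s ^ n.
Proof.
elim: n p => [|n IH] p /=; first by case: (P p).
rewrite -big_split /= (eq_bigr (fun _ => s ^ n)) ?sumA_const ?expnS // => a _; exact: IH.
Qed.

Lemma cnt_le P n p : cnt P n p <= s ^ n.
Proof. by rewrite -(cnt_compl P n p) leq_addr. Qed.

Lemma cnt_mono P P' n p : (forall q, P q -> P' q) -> cnt P n p <= cnt P' n p.
Proof.
move=> H; elim: n p => [|n IH] p /=.
  by case E: (P p) => //; rewrite (H _ E).
by apply: leq_sum => a _; exact: IH.
Qed.

Lemma cnt_comp P k n p :
  cnt P (k + n) p = \sum_q cnt (pred1 q) k p * cnt P n q.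
Proof.
elim: k p => [|k IH] p /=.
  rewrite (bigD1 p) //= eqxx mul1n big1 ?addn0 // => q Hq.
  by rewrite eq_sym (negbTE Hq).
under eq_bigr => a _ do rewrite IH.
rewrite exchange_big /=; apply: eq_bigr => q _; by rewrite big_distrl.
Qed.

Lemma cnt_point P n p : \sum_q cnt (pred1 q) n p * P q = cnt P n p.
Proof. by rewrite -[in RHS](addn0 n) cnt_comp. Qed.

Lemma cnt_word P u p : P (run p u) -> 0 < cnt P (size u) p.
Proof.
elim: u p => [|a u IH] p /=; first by rewrite /run /= => ->.
move=> H; rewrite (bigD1 a) //=; exact: leq_trans (IH _ H) (leq_addr _ _).
Qed.

Lemma cnt_pos P n p : 0 < cnt P n p -> exists u, size u = n /\ P (run p u).
Proof.
elim: n p => [|n IH] p /=; first by move=> H; exists [::]; split => //; case: (P p) H.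
move=> H; have [a _ Ha] : exists2 a, true & 0 < cnt P n (trans M p a).
  apply/exists_inP; apply: contraTT H; rewrite negb_exists_in => /forall_inP H.
  by rewrite -leqNgt leqn0 sum_nat_eq0; apply/forall_inP => a _; rewrite -leqn0 leqNgt H.
by have [u [Hs Hu]] := IH _ Ha; exists (a :: u); split => //=; rewrite Hs.
Qed.

Lemma cnt_sink P n q : is_sink q -> cnt P n q = P q * s ^ n.
Proof.
move=> Hq; elim: n => [|n IH] /=; first by rewrite muln1.
rewrite (eq_bigr (fun _ => P q * s ^ n)) ?sumA_const ?expnS; first by rewrite mulnCA.
by move=> a _; rewrite Hq IH.
Qed.

Lemma run_sink q u : is_sink q -> run q u = q.
Proof. by move=> Hq; elim: u => [|a u IH] //=; rewrite /run /= Hq. Qed.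

Lemma run_cat p u v : run p (u ++ v) = run (run p u) v.
Proof. by rewrite /run foldl_cat. Qed.

Definition Zsmall (g : nat -> nat) :=
  forall D, 0 < D -> exists N, forall n, N <= n -> D * g n < s ^ n.

End Count.

Lemma bern_aux a m : a ^ m * (a + m) <= (a + 1) ^ m * a.
Proof.
elim: m => [|m IH]; first by rewrite !expn0 !mul1n addn0.
rewrite !expnS.
set x := a ^ m in IH *; set y := (a + 1) ^ m in IH *.
have H2 : x * (a + m) * (a + 1) <= y * a * (a + 1) by rewrite leq_mul2r IH orbT.
have H3 : x * a * (a + m.+1) <= x * (a + m) * (a + 1).
  rewrite -!mulnA leq_mul2l; apply/orP; right; nia.
move: (leq_trans H3 H2).
by rewrite [a * x]mulnC [(a + 1) * y]mulnC -!mulnA [a * (a + 1)]mulnC.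
Qed.

Lemma bern a m D : 0 < a -> D * a <= m -> D * a ^ m < (a + 1) ^ m.
Proof.
move=> Ha Hm.
have H := bern_aux a m.
have Hp : 0 < a ^ m by rewrite expn_gt0 Ha.
have : D * a ^ m * a < a ^ m * (a + m) by nia.
move=> H2; have H3 := leq_trans H2 H.
by rewrite ltn_pmul2r in H3.
Qed.

Section Sync.
Variable A : finType.
Variable M : dfa A.
Local Notation s := #|A|.
Hypothesis sA : 0 < s.

Lemma sync_dir (P : pred (state M)) q w p0 :
  is_sink q -> P q -> synchronising M w ->
  Zsmall A (fun n => cnt (predC P) n p0).
Proof.
move=> Hq Pq Hw.
pose b n := cnt (predC (pred1 q)) n p0.
have L1 n : cnt (predC P) n p0 <= b n.
  apply: cnt_mono => r /=; apply: contra => /eqP ->; exact: Pq.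
set k := size w.
set a := s ^ k - 1.
have L3 r : r != q -> cnt (predC (pred1 q)) k r <= a.
  move=> _; have := cnt_compl (pred1 q) k r.
  have : 0 < cnt (pred1 q) k r.
    apply: (@cnt_word _ _ _ w); by rewrite /= (Hw r q) run_sink.
  move=> H1 H2; rewrite /a -H2. by rewrite -addnBAC // leq_addl.
have L4 n : b (n + k) <= a * b n.
  rewrite /b cnt_comp -(cnt_point _ n) big_distrr /=.
  apply: leq_sum => r _.
  case: (eqVneq r q) => [->|Hr].
    by rewrite (cnt_sink (predC (pred1 q)) k Hq) /= eqxx !muln0.
  by rewrite /= muln1 mulnC leq_mul2r L3 // orbT.
have L5 m r0 : b (m * k + r0) <= a ^ m * s ^ r0.
  elim: m => [|m IH]; first by rewrite mul0n add0n expn0 mul1n cnt_le.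
  rewrite mulSn -addnA addnC (leq_trans (L4 _)) // expnS -mulnA leq_mul2l.
  by rewrite IH orbT.
move=> D HD.
case: (posnP a) => Ha.
  exists k => n Hn.
  have : b n = 0.
    by apply/eqP; rewrite -leqn0 -(subnK Hn) (leq_trans (L4 _)) // Ha.
  move=> Hb; have := L1 n; rewrite Hb leqn0 => /eqP ->.
  by rewrite muln0 expn_gt0 sA.
have Hk : 0 < k.
  by move: Ha; rewrite /a; case: (k) => //; rewrite expn0.
exists (D * a * k) => n Hn.
rewrite (divn_eq n k).
set m := n %/ k; set r := n %% k.
have Hm : D * a <= m by rewrite /m leq_divRL.
apply: (@leq_ltn_trans (D * (a ^ m * s ^ r))).
  by rewrite leq_mul2l (leq_trans (L1 _)) ?orbT // L5.
rewrite mulnA expnD (mulnC m k) expnM ltn_pmul2r ?expn_gt0 ?sA //.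
have -> : s ^ k = a + 1 by rewrite /a subnK // expn_gt0 sA.
exact: bern.
Qed.
End Sync.

Lemma bound_list (T : eqType) (R : T -> Prop) (Q : T -> nat -> Prop) (l : seq T) :
  (forall r, R r -> exists j, Q r j) ->
  exists K, forall r, r \in l -> R r -> exists j, j <= K /\ Q r j.
Proof.
move=> H; elim: l => [|x l [K IH]]; first by exists 0.
case: (classic (R x)) => [Rx|nRx].
  have [j Hj] := H x Rx; exists (maxn K j) => r; rewrite inE => /orP [/eqP ->|Hr] Rr.
    by exists j; split => //; rewrite leq_maxr.
  have [j' [Hj' Qj']] := IH r Hr Rr; exists j'; split => //.
  by rewrite (leq_trans Hj') // leq_maxl.
exists K => r; rewrite inE => /orP [/eqP ->|Hr] Rr; first by [].
exact: IH.
Qed.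

Section Nec.
Variable A : finType.
Variable M : dfa A.
Local Notation s := #|A|.
Hypothesis sA : 0 < s.
Variable P : pred (state M).
Hypothesis Hred : forall p q : state M,
  (forall w, P (run p w) = P (run q w)) -> p = q.
Hypothesis Hacc : accessible M.

Lemma cnt_predT n (p : state M) : cnt (@predT (state M)) n p = s ^ n.
Proof.
elim: n p => [|n IH] p //=.
by rewrite (eq_bigr (fun _ => s ^ n)) ?sumA_const ?expnS // => a _; exact: IH.
Qed.

Lemma stepA p : Zsmall A (fun n => cnt (predC P) n (init M)) ->
  Zsmall A (fun n => cnt (predC P) n p).
Proof.
move=> HZ D HD.
have [u Hu] := Hacc p.
set k := size u.
have Hk n : cnt (predC P) n p <= cnt (predC P) (k + n) (init M).
  rewrite cnt_comp (bigD1 p) //=.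
  have : 0 < cnt (pred1 p) k (init M) by apply: (@cnt_word _ _ _ u); rewrite /= Hu.
  move=> H; apply: leq_trans (leq_addr _ _).
  by rewrite -{1}[cnt _ n p]mul1n leq_mul2r H orbT.
have [N HN] := HZ (D * s ^ k) (ltac:(by rewrite muln_gt0 HD expn_gt0 sA)).
exists N => n Hn.
have := HN (k + n) (leq_trans Hn (leq_addl _ _)).
rewrite expnD => H.
have H2 : s ^ k * (D * cnt (predC P) n p) < s ^ k * s ^ n.
  apply: leq_ltn_trans H.
  by rewrite mulnCA mulnA leq_mul2l Hk orbT.
by rewrite ltn_pmul2l ?expn_gt0 ?sA in H2.
Qed.

Lemma aux_ineq K j N x : j <= K -> K.+1 * s ^ K * x < s ^ (N + j) ->
  K.+1 * (x * s ^ (K - j)) <= s ^ N - 1.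
Proof.
move=> Hj H.
have Hp : 0 < s ^ N by rewrite expn_gt0 sA.
suff : K.+1 * (x * s ^ (K - j)) < s ^ N by lia.
have Hj0 : 0 < s ^ j by rewrite expn_gt0 sA.
rewrite -(ltn_pmul2r Hj0).
have E : s ^ K = s ^ (K - j) * s ^ j by rewrite -expnD subnK.
move: H; rewrite E expnD.
suff -> : K.+1 * (x * s ^ (K - j)) * s ^ j = K.+1 * (s ^ (K - j) * s ^ j) * x by [].
set a := s ^ (K - j); set b := s ^ j; nia.
Qed.

Definition reach (p r : state M) := exists u, run p u = r.

Lemma stepB p : Zsmall A (fun n => cnt (predC P) n (init M)) ->
  exists z, reach p z /\ forall u, P (run z u).
Proof.
move=> HZ.
apply: NNPP => Hno.
have H1 : forall r, reach p r -> exists j, exists u, size u = j /\ ~~ P (run r u).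
  move=> r Hr; apply: NNPP => Hn; apply: Hno; exists r; split => // u.
  apply: NNPP => Hu; apply: Hn; exists (size u), u; split => //; exact/negP.
have [K HK] := bound_list (enum (state M)) H1.
pose t n (j : 'I_K.+1) := cnt (predC P) (n + j) p * s ^ (K - j).
have Hlow n : s ^ n <= \sum_j t n j.
  rewrite /t.
  under eq_bigr => j _ do rewrite cnt_comp big_distrl /=.
  rewrite exchange_big /= -(cnt_predT n p) -cnt_point.
  apply: leq_sum => q _.
  under eq_bigr => i _ do rewrite -mulnA.
  rewrite -big_distrr /= muln1.
  case: (posnP (cnt (pred1 q) n p)) => [->|Hq]; first by [].
  rewrite -{1}[cnt _ n p]muln1 leq_mul2l; apply/orP; right.
  have [u [_ Hu]] := cnt_pos Hq.
  have [j [Hj [u' [Hs Hu']]]] := HK q (mem_enum _ _) (ex_intro _ u (eqP Hu)).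
  rewrite (bigD1 (Ordinal (Hj : j < K.+1))) //=.
  apply: leq_trans (leq_addr _ _).
  rewrite muln_gt0 expn_gt0 sA andbT.
  by rewrite -Hs; apply: cnt_word.
have HZp := stepA p HZ.
have [N HN] := HZp (K.+1 * s ^ K) (ltac:(by rewrite muln_gt0 expn_gt0 sA)).
have Hup : \sum_(j < K.+1) t N j <= s ^ N - 1.
  rewrite -(leq_pmul2l (ltn0Sn K)) big_distrr /=.
  rewrite -[X in _ <= X * _]card_ord -sum_nat_const.
  apply: leq_sum => j _.
  have Hj : j <= K by rewrite -ltnS.
  rewrite /t; exact: (aux_ineq Hj (HN (N + j) (leq_addr _ _))).
have := Hlow N; have : 0 < s ^ N by rewrite expn_gt0 sA.
move=> G1 G2; have := leq_trans G2 Hup; by rewrite subn1 leqNgt ltn_predL G1.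
Qed.

Lemma nec_dir : Zsmall A (fun n => cnt (predC P) n (init M)) ->
  zero_automaton M /\ exists q, is_sink q /\ P q.
Proof.
move=> HZ.
have [z [_ Hz]] := stepB (init M) HZ.
have Guniq z' : (forall u, P (run z' u)) -> z' = z.
  by move=> Hz'; apply: Hred => w; rewrite Hz Hz'.
have Hsink : is_sink z.
  move=> a; apply: Guniq => u; exact: (Hz (a :: u)).
have Hreach p : reach p z.
  have [z' [Hr Hz']] := stepB p HZ; by rewrite -(Guniq z' Hz').
have Hlist (l : seq (state M)) : exists w, forall r, r \in l -> run r w = z.
  elim: l => [|x l [w IH]]; first by exists [::].
  have [u Hu] := Hreach (run x w).
  exists (w ++ u) => r; rewrite inE => /orP [/eqP ->|Hr].
    by rewrite run_cat.
  by rewrite run_cat IH // run_sink.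
have [w Hw] := Hlist (enum (state M)).
split; last by exists z; split => //; exact: (Hz [::]).
split; first by exists z.
by exists w => p p'; rewrite !Hw ?mem_enum.
Qed.
End Nec.

Section Conv.
Local Open Scope ring_scope.
Variable A : finType.
Local Notation s := #|A|.
Hypothesis sA : (0 < s)%N.

Lemma divlt (g S D : rat) : 0 < S -> 0 < D -> (g / S < D^-1) = (D * g < S).
Proof. by move=> HS HD; rewrite ltr_pdivrMr // ltr_pdivlMl. Qed.

Lemma conv (g : nat -> nat) :
  (forall eps : rat, 0 < eps -> exists N : nat, forall n : nat, (N <= n)%N ->
      (g n)%:R / (s ^ n)%:R < eps) <-> Zsmall A g.
Proof.
have sn n : 0 < (s ^ n)%:R :> rat by rewrite ltr0n expn_gt0 sA.
split.
  move=> H D HD.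
  have [N HN] := H (D%:R^-1) (ltac:(by rewrite invr_gt0 ltr0n)).
  exists N => n Hn; have := HN n Hn.
  by rewrite divlt // ?ltr0n // -natrM ltr_nat.
move=> H eps Heps.
set D := Num.bound (eps^-1).
have HD : eps^-1 < D%:R by apply: archi_boundP; rewrite invr_ge0 ltW.
have D0 : (0 < D)%N.
  by rewrite -(ltr_nat rat) (lt_trans _ HD) // invr_gt0.
have [N HN] := H D D0.
exists N => n Hn; have := HN n Hn.
rewrite -(ltr_nat rat) natrM -divlt // ?ltr0n // => H1.
apply: (lt_trans H1).
rewrite -[X in _ < X]invrK ltf_pV2 ?posrE ?invr_gt0 ?ltr0n //.
Qed.
End Conv.

Lemma cnt_ext (A : finType) (M : dfa A) (P P' : pred (state M)) n p :
  P =1 P' -> cnt P n p = cnt P' n p.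
Proof. by move=> H; apply/eqP; rewrite eqn_leq !cnt_mono // => q; rewrite H. Qed.

Unset Implicit Arguments.
Local Open Scope ring_scope.

Theorem mainTheorem2 (A : finType) (L : pred (seq A)) (M : dfa A) :
  (0 < #|A|)%N ->
  minimal_automaton_of M L ->
  (density_is L 1 <->
     zero_automaton M /\ exists q : state M, is_sink q /\ final M q) /\
  (density_is L 0 <->
     zero_automaton M /\ exists q : state M, is_sink q /\ ~~ final M q).
Proof.
move=> sA [Hacc Hred HL].
set S := fun n => (#|A| ^ n)%:R : rat.
have Sp n : 0 < S n by rewrite ltr0n expn_gt0 sA.
pose gF n := cnt (final M) n (init M).
pose gN n := cnt (predC (final M)) n (init M).
have dens n : density_at L n = (gF n)%:R / S n.
  rewrite /density_at /gF -cnt_card; congr (_%:R / _).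
  by apply: eq_card => t; rewrite !inE HL.
have sum n : (gF n)%:R + (gN n)%:R = S n :> rat by rewrite -natrD cnt_compl.
have d1 n : `|density_at L n - 1| = (gN n)%:R / S n.
  rewrite dens.
  have -> : (gF n)%:R = S n - (gN n)%:R :> rat by rewrite -(sum n) addrK.
  rewrite mulrBl divff ?gt_eqF // addrAC subrr add0r normrN.
  by rewrite ger0_norm // divr_ge0 ?ler0n ?ltW.
have d0 n : `|density_at L n - 0| = (gF n)%:R / S n.
  by rewrite subr0 dens ger0_norm // divr_ge0 ?ler0n ?ltW.
have Hred' : forall p q : state M,
    (forall w, predC (final M) (run p w) = predC (final M) (run q w)) -> p = q.
  move=> p q H; apply: Hred => w; have := H w => /= /(congr1 negb); by rewrite !negbK.
split; split.
- move=> H; apply: (nec_dir sA Hred Hacc); apply/(conv sA) => eps Heps.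
  have [N HN] := H eps Heps; exists N => n Hn; rewrite -[X in X < _]d1; exact: HN.
- move=> [[_ [w Hw]] [q [Hq Fq]]].
  have HZ := sync_dir sA (init M) Hq Fq Hw.
  move/(conv sA): HZ => HZ eps Heps.
  have [N HN] := HZ eps Heps; exists N => n Hn; rewrite d1; exact: HN.
- move=> H.
  have HZ : Zsmall A (fun n => cnt (predC (predC (final M))) n (init M)).
    apply/(conv sA) => eps Heps.
    have [N HN] := H eps Heps; exists N => n Hn.
    rewrite (cnt_ext _ _ (P' := final M)); last by move=> x /=; rewrite negbK.
    rewrite -[X in X < _]d0; exact: HN.
  exact: (nec_dir sA Hred' Hacc HZ).
- move=> [[_ [w Hw]] [q [Hq Fq]]].
  have HZ := sync_dir sA (P := predC (final M)) (init M) Hq Fq Hw.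
  move/(conv sA): HZ => HZ eps Heps.
  have [N HN] := HZ eps Heps; exists N => n Hn; rewrite d0.
  have := HN n Hn.
  by rewrite (cnt_ext _ _ (P' := final M)) // => x /=; rewrite negbK.
Qed.
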